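(* Let $\Lambda=\{(\lambda_1,\lambda_2):1\le\lambda_1<\lambda_2\le n\}$ and $V$ the set of functions $v:\Lambda\to\mathbb Z$. Let $H=\bigoplus_{\sigma\in S_n}H_\sigma$ with $H_\sigma=\ell^2(\mathbb Z)^{\otimes\Lambda}$, the tensor factors labelled by $\lambda\in\Lambda$, with standard basis $\{e^\lambda_{\sigma,m}:m\in\mathbb Z\}$ in the factor labelled $\lambda$, and put $\varepsilon_{\sigma,v}=\bigotimes_{\lambda\in\Lambda}e^\lambda_{\sigma,v(\lambda)}$ (an orthonormal basis of $H$ as $\sigma\in S_n$, $v\in V$ vary). For $i,k\in\{1,\dots,n\}$ let $U_{ik}$ be the bounded operator on $H$ with $U_{ik}\varepsilon_{\sigma,v}=\bigotimes_\lambda U_{ik}^\lambda e^\lambda_{\sigma,v(\lambda)}$ if $\sigma(k)=i$ and $U_{ik}\varepsilon_{\sigma,v}=0$ if $\sigma(k)\neq i$, where $U_{ik}^\lambda e^\lambda_{\sigma,m}=e^\lambda_{\sigma,m}$ if $k\notin\{\lambda_1,\lambda_2\}$, $U_{ik}^\lambda e^\lambda_{\sigma,m}=(\overline{\omega_{i,\sigma(\lambda_2)}}\,\omega_{k,\lambda_2})^me^\lambda_{\sigma,m}$ if $k=\lambda_1$, and $U_{ik}^\lambda e^\lambda_{\sigma,m}=e^\lambda_{\sigma,m+1}$ if $k=\lambda_2$. Then the operators $U_{ik}$ satisfy, for all $i,j,k,l$: $U_{ik}U_{jl}+\omega_{ji}U_{jk}U_{il}=\omega_{kl}U_{il}U_{jk}+\omega_{ji}\omega_{kl}U_{jl}U_{ik}$;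 $\sum_iU_{ik}U_{il}^*=\delta_{kl}1$; $\sum_iU_{il}^*U_{ik}=\delta_{kl}1$; $U_{jk}U_{ik}^*=0$ and $U_{ik}^*U_{jk}=0$ for $i\neq j$.
   Context: $n\ge2$, $\theta=(\theta_{ij})\in M_n(\mathbb R)$ skew-symmetric, $\omega_{ij}=e^{2\pi i\theta_{ij}}$; $S_n$ is the symmetric group on $\{1,\dots,n\}$. *)

(* Defs.v *)
From HB Require Import structures.
From mathcomp Require Import all_boot all_order all_algebra all_fingroup.
From mathcomp Require Import complex.
From mathcomp Require Import boolp reals trigo.
Set Implicit Arguments. Unset Strict Implicit. Unset Printing Implicit Defensive.
Import Order.TTheory GRing.Theory Num.Theory.
Local Open Scope ring_scope.
Local Open Scope complex_scope.

(* Index set Lambda = {(l1,l2) : 1 <= l1 < l2 <= n}, with 0-based indices 'I_n. *)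
Definition Lam (n : nat) := {p : 'I_n * 'I_n | (p.1 < p.2)%N}.

Definition Vn (n : nat) := Lam n -> int.

(* Indices of the orthonormal basis eps_{sigma,v} of H = (+)_sigma H_sigma. *)
Definition Idx (n : nat) := ('S_n * Vn n)%type.

(* A vector of H is represented by its coefficient family w.r.t. the basis
   eps_{sigma,v}; we allow arbitrary families (l^2 sits inside). *)
Definition vec (R : realType) (n : nat) := Idx n -> R[i].

Definition expi (R : realType) (x : R) : R[i] := cos x +i* sin x.
Definition omega (R : realType) (n : nat) (theta : 'M[R]_n) (i j : 'I_n) : R[i] :=
  expi (2 * pi * theta i j).

Definition eps (R : realType) (n : nat) (x : Idx n) : vec R n :=
  fun y => if pselect (y = x) then 1 else 0.

(* v + s * [lambda_2 = k] : the shift performed by U_ik (by s = 1). *)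
Definition vshift (n : nat) (k : 'I_n) (v : Vn n) (s : int) : Vn n :=
  fun l => v l + s * ((sval l).2 == k)%:R.

(* scalar by which U_ik multiplies eps_{sigma,v} (when sigma k = i):
   the product over lambda of the factors of U^lambda_ik. *)
Definition Ucoef (R : realType) (n : nat) (theta : 'M[R]_n) (i k : 'I_n)
    (sigma : 'S_n) (v : Vn n) : R[i] :=
  \prod_(l : Lam n)
     (if (sval l).1 == k then
        ((omega theta i (sigma (sval l).2))^* * omega theta k (sval l).2) ^ (v l)
      else 1).

(* U_ik eps_{sigma,v} = [sigma k = i] Ucoef * eps_{sigma, vshift k v 1},
   written on coefficient families. *)
Definition Uop (R : realType) (n : nat) (theta : 'M[R]_n) (i k : 'I_n)
    (f : vec R n) : vec R n :=
  fun x => let: (sigma, w) := x in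
    if sigma k == i then
      Ucoef theta i k sigma (vshift k w (-1)) * f (sigma, vshift k w (-1))
    else 0.

Definition Ustar (R : realType) (n : nat) (theta : 'M[R]_n) (i k : 'I_n)
    (g : vec R n) : vec R n :=
  fun x => let: (sigma, v) := x in
    if sigma k == i then (Ucoef theta i k sigma v)^* * g (sigma, vshift k v 1)
    else 0.

Definition kron (R : realType) (n : nat) (k l : 'I_n) : R[i] := (k == l)%:R.

(* Main.v *)
Require Import Defs.
From HB Require Import structures.
From mathcomp Require Import all_boot all_order all_algebra all_fingroup.
From mathcomp Require Import complex.
From mathcomp Require Import boolp reals trigo.
From mathcomp Require Import ring lra.
Import Order.TTheory GRing.Theory Num.Theory.
Local Open Scope ring_scope.
Local Open Scope complex_scope.
Lemma conjE (R : realType) (x : R[i]) : Num.conj x = conjc x.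
Proof. reflexivity. Qed.
Section S.
Variable R : realType.
Lemma expiD (a b : R) : expi a * expi b = expi (a + b).
Proof. rewrite /expi cosD sinD. simpc. by congr (_ +i* _); rewrite addrC. Qed.
Lemma expiN (a : R) : conjc (expi a) = expi (- a).
Proof. by rewrite /expi cosN sinN. Qed.
Lemma expiN2 (a : R) : (cos a -i* sin a) = expi (- a).
Proof. by rewrite /expi cosN sinN. Qed.
Lemma m0C (x : R[i]) : x * 0 = 0. Proof. exact: mulr0. Qed.
Lemma m0C' (x : R[i]) : 0 * x = 0. Proof. exact: mul0r. Qed.
Lemma m1C (x : R[i]) : x * 1 = x. Proof. exact: mulr1. Qed.
Lemma a0C (x : R[i]) : x + 0 = x. Proof. exact: addr0. Qed.
Lemma a0C' (x : R[i]) : 0 + x = x. Proof. exact: add0r. Qed.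
Lemma expi_eq1 (a : R) : a = 0 -> expi a = 1.
Proof. move=> ->; by rewrite /expi cos0 sin0. Qed.
Lemma expi0 : expi (0:R) = 1.
Proof. by rewrite /expi cos0 sin0. Qed.
Lemma expi_neq0 (a : R) : expi a != 0.
Proof. apply/negP=> /eqP h. have := expiD a (-a). by rewrite h mul0r subrr expi0 => /esym/eqP; rewrite oner_eq0. Qed.
Lemma expiV (a : R) : (expi a)^-1 = expi (- a).
Proof. by rewrite -[RHS](mulKf (expi_neq0 a)) expiD subrr expi0 mulr1. Qed.

Variable n : nat.
Variable theta : 'M[R]_n.

Lemma base_unit (i j k l : 'I_n) : ((omega theta i j)^* * omega theta k l) \is a GRing.unit.
Proof. by rewrite /omega conjE expiN expiD unitfE expi_neq0. Qed.

Lemma Ucoef_shift (i k l : 'I_n) (sigma : 'S_n) (v : Vn n) (s : int) :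
  Ucoef theta i k sigma (vshift l v s) = Ucoef theta i k sigma v *
    (if (k < l)%N then ((omega theta i (sigma l))^* * omega theta k l) ^ s else 1).
Proof.
rewrite /Ucoef.
set G := fun lam : Lam n => if ((sval lam).1 == k) && ((sval lam).2 == l)
   then ((omega theta i (sigma (sval lam).2))^* * omega theta k (sval lam).2) ^ s else 1.
transitivity (\prod_(lam : Lam n) ((if (sval lam).1 == k then
        ((omega theta i (sigma (sval lam).2))^* * omega theta k (sval lam).2) ^ (v lam)
      else 1) * G lam)).
  apply: eq_bigr => lam _; rewrite /G /vshift.
  case: ((sval lam).1 == k) => /=; last by rewrite mulr1.
  rewrite exprzDr ?base_unit //.
  by case: ((sval lam).2 == l); rewrite /= ?mulr0 ?expr0z ?mulr1.
rewrite big_split /=; congr (_ * _).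
case: ltnP => hkl.
  rewrite (bigD1 (exist _ (k, l) hkl)) //= /G /= !eqxx /= big1 ?mulr1 //.
  move=> [[a b] h] /= hne; case: andP => // [[/eqP ha /eqP hb]].
  by move: hne; subst a b; rewrite (bool_irrelevance h hkl) eqxx.
apply: big1 => -[[a b] h] _; rewrite /G /=; case: andP => // [[/eqP ha /eqP hb]].
by subst; move: h; rewrite ltnNge hkl.
Qed.

Lemma Ucoef_conj (i k : 'I_n) (sigma : 'S_n) (v : Vn n) :
  Ucoef theta i k sigma v * (Ucoef theta i k sigma v)^* = 1.
Proof.
rewrite /Ucoef conjE rmorph_prod -big_split /= big1 // => lam _.
case: ifP => _; last by rewrite rmorph1 mulr1.
rewrite /omega !conjE !expiN !expiD rmorphXz ?unitfE ?expi_neq0 //= expiN2.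
by rewrite -exprzMl ?unitfE ?expi_neq0 // expiD subrr expi0 exp1rz.
Qed.

Lemma vshiftK (k : 'I_n) (w : Vn n) (s : int) : vshift k (vshift k w s) (- s) = w.
Proof. apply: funext => l; rewrite /vshift; by rewrite mulNr addrK. Qed.

Lemma vshiftK1 (k : 'I_n) (w : Vn n) : vshift k (vshift k w 1) (-1) = w.
Proof. apply: funext => l; rewrite /vshift. ring. Qed.
Lemma vshiftK2 (k : 'I_n) (w : Vn n) : vshift k (vshift k w (-1)) 1 = w.
Proof. apply: funext => l; rewrite /vshift. ring. Qed.

Lemma pselect_iff (P Q : Prop) (T : Type) (a b : T) : (P <-> Q) ->
  (if pselect P then a else b) = (if pselect Q then a else b).
Proof.
move=> [h1 h2]; case: pselect => p; case: pselect => q //.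
  by case: q; apply: h1.
by case: p; apply: h2.
Qed.

Lemma vshiftC (k l : 'I_n) (w : Vn n) (a b : int) :
  vshift k (vshift l w a) b = vshift l (vshift k w b) a.
Proof. apply: funext => m; rewrite /vshift; by rewrite -!addrA [_ * _ + _]addrC. Qed.
End S.

Opaque cos sin.

Theorem proposition3p2 (R : realType) (n : nat) (theta : 'M[R]_n)
  (hn : (2 <= n)%N) (hskew : theta^T = - theta) :
  (* sanity: U_ik acts on the basis as described *)
  (forall (i k : 'I_n) (sigma : 'S_n) (v : Vn n),
      Uop theta i k (eps R (sigma, v)) =
      if sigma k == i then
        (fun y => Ucoef theta i k sigma v * eps R (sigma, vshift k v 1) y)
      else (fun _ => 0)) /\
  (* sanity: Ustar i k is the adjoint of U_ik (matrix coefficients) *)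
  (forall (i k : 'I_n) (x y : Idx n),
      Uop theta i k (eps R x) y = (Ustar theta i k (eps R y) x)^*) /\
  (* the relations *)
  (forall (i j k l : 'I_n) (f : vec R n) (x : Idx n),
      Uop theta i k (Uop theta j l f) x
        + omega theta j i * Uop theta j k (Uop theta i l f) x
      = omega theta k l * Uop theta i l (Uop theta j k f) x
        + omega theta j i * omega theta k l * Uop theta j l (Uop theta i k f) x) /\
  (forall (k l : 'I_n) (f : vec R n) (x : Idx n),
      \sum_(i < n) Uop theta i k (Ustar theta i l f) x = kron R k l * f x) /\
  (forall (k l : 'I_n) (f : vec R n) (x : Idx n),
      \sum_(i < n) Ustar theta i l (Uop theta i k f) x = kron R k l * f x) /\
  (forall (i j k : 'I_n) (f : vec R n) (x : Idx n), i != j ->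
      Uop theta j k (Ustar theta i k f) x = 0) /\
  (forall (i j k : 'I_n) (f : vec R n) (x : Idx n), i != j ->
      Ustar theta i k (Uop theta j k f) x = 0).
Proof.
have th : forall a b, theta b a = - theta a b.
  by move=> a b; have := congr1 (fun M : 'M[R]_n => M a b) hskew; rewrite !mxE.
have oJ : forall a b, Num.conj (omega theta a b) = omega theta b a.
  by move=> a b; rewrite /omega conjE expiN (th a b) !mulrN.
have o1 : forall a, omega theta a a = 1.
  move=> a; have := th a a; rewrite /omega => h.
  have -> : theta a a = 0 by lra.
  by rewrite mulr0 expi0.
split.
  move=> i k sigma v; apply: funext => -[s w] /=.
  rewrite /eps (@pselect_iff _ ((s, w) = (sigma, vshift k v 1))); last first.
    by split=> [[-> <-]|[-> ->]]; rewrite ?vshiftK1 ?vshiftK2.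
  rewrite (fun_if (fun F => F (s, w))) /=.
  destruct (pselect ((s, w) = (sigma, vshift k v 1))) as [e|ne] => /=.
  2:{ rewrite mulr0 if_same; case: (sigma k == i) => //.
    destruct (pselect _) as [e|ne2] => /=; [by case: (ne e) | by rewrite mulr0]. }
  case: e => -> ->; rewrite vshiftK1; case: (sigma k == i) => //.
  by destruct (pselect _) as [e|ne].
split.
  move=> i k [s1 v1] [s2 w2] /=.
  rewrite /eps (@pselect_iff _ ((s1, vshift k v1 1) = (s2, w2))); last first.
    by split=> [[-> <-]|[-> <-]]; rewrite ?vshiftK1 ?vshiftK2.
  destruct (pselect ((s1, vshift k v1 1) = (s2, w2))) as [e|ne] => /=.
  2:{ rewrite mulr0 if_same; case: (s1 k == i); last by rewrite ?conjE conjc0.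
    destruct (pselect _) as [e|ne2] => /=; [by case: (ne e) | by rewrite mulr0 ?conjE conjc0]. }
  case: e => -> <-; rewrite vshiftK1 ?conjE; case: ifP => _; last by rewrite conjc0.
  destruct (pselect _) as [e|ne2] => /=; last by case: ne2.
  by rewrite !mulr1; case: (Ucoef theta i k s2 v1) => a b; rewrite /= opprK.
split.
  move=> i j k l f x.
  have [<-|nkl] := eqVneq k l; first by rewrite o1 mul1r mulr1.
  case: x => s w; rewrite /Uop /=.
  have hs : s k != s l by apply: contra nkl => /eqP /perm_inj ->.
  have hs' : s l != s k by rewrite eq_sym.
  do 12 rewrite Ucoef_shift. rewrite !(ltnn k) !(ltnn l) /= !(@vshiftC n k l).
  set F := f _.
  move: (@Ucoef R n theta) => U.
  have [<-|ni] := eqVneq (s k) i.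
    have [<-|nj] := eqVneq (s l) j.
      rewrite ?eqxx (negbTE hs) (negbTE hs') /= ?m0C ?m0C' ?a0C ?a0C'.
      set c1 := U (s k) k s w; set c2 := U (s l) l s w.
      case: (ltngtP k l) => hkl; last by move/val_inj: hkl => e; rewrite e eqxx in nkl.
        transitivity (1 * (c1 * c2 * F)); first by ring.
        transitivity (omega theta (s l) (s k) * omega theta k l *
           ((Num.conj (omega theta (s k) (s l)) * omega theta k l) ^ (-1)) * (c1 * c2 * F)); last by ring.
        congr (_ * _); symmetry; rewrite /omega ?conjE ?expiN ?expiD ?exprN1 ?expiV ?expiD.
        apply: expi_eq1; rewrite (th (s k) (s l)); ring.
      transitivity ((Num.conj (omega theta (s l) (s k)) * omega theta l k) ^ (-1) * (c1 * c2 * F)); first by ring.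
      transitivity (omega theta (s l) (s k) * omega theta k l * (c1 * c2 * F)); last by ring.
      congr (_ * _); rewrite /omega ?conjE ?expiN ?expiD ?exprN1 ?expiV ?expiD; congr expi.
      rewrite (th k l); ring.
    by rewrite (negbTE hs'); case: (s k == j); rewrite /=; ring.
  have [<-|nj] := eqVneq (s k) j.
    have [<-|ni'] := eqVneq (s l) i.
      rewrite ?(negbTE hs) ?(negbTE hs') /=.
      set c1 := U (s k) k s w; set c2 := U (s l) l s w.
      case: (ltngtP k l) => hkl; last by move/val_inj: hkl => e; rewrite e eqxx in nkl.
        transitivity (omega theta (s k) (s l) * (c1 * c2 * F)); first by ring.
        transitivity (omega theta k l *
           ((Num.conj (omega theta (s k) (s l)) * omega theta k l) ^ (-1)) * (c1 * c2 * F)); last by ring.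
        congr (_ * _); rewrite /omega ?conjE ?expiN ?expiD ?exprN1 ?expiV ?expiD; congr expi.
        ring.
      transitivity (omega theta (s k) (s l) * (Num.conj (omega theta (s l) (s k)) * omega theta l k) ^ (-1) * (c1 * c2 * F)); first by ring.
      transitivity (omega theta k l * (c1 * c2 * F)); last by ring.
      congr (_ * _); rewrite /omega ?conjE ?expiN ?expiD ?exprN1 ?expiV ?expiD; congr expi.
      rewrite (th k l) (th (s k) (s l)); ring.
    by rewrite ?(negbTE hs') /=; ring.
  by case: (s l == i); case: (s l == j); rewrite /=; ring.

split.
  move=> k l f [s w]; rewrite /Uop /Ustar /=.
  rewrite (bigD1 (s k)) //= eqxx big1 => [|i ne]; last by rewrite eq_sym (negbTE ne).
  rewrite /kron; case: (eqVneq k l) => [<-|nkl].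
    rewrite eqxx Ucoef_shift ltnn vshiftK2 /=.
    have hc := @Ucoef_conj R n theta (s k) k s w.
    move: hc; move: (Ucoef theta (s k) k s w) => c hc; move: (f (s, w)) => y.
    rewrite (mulr1 c); transitivity (c * Num.conj c * y + 0); first by ring.
    by rewrite hc; ring.
  have hs' : s l != s k by apply: contra nkl => /eqP /perm_inj ->.
  rewrite (negbTE hs'); move: (@Ucoef R n theta) => U; rewrite /=; ring.
split.
  move=> k l f [s v]; rewrite /Uop /Ustar /=.
  rewrite (bigD1 (s l)) //= eqxx big1 => [|i ne]; last by rewrite eq_sym (negbTE ne).
  rewrite /kron; case: (eqVneq k l) => [<-|nkl].
    rewrite eqxx Ucoef_shift ltnn vshiftK1 Ucoef_shift ltnn /=.
    have hc := @Ucoef_conj R n theta (s k) k s v.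
    move: hc; move: (Ucoef theta (s k) k s v) => c hc; move: (f (s, v)) => y.
    transitivity (c * Num.conj c * y + 0); first by ring.
    by rewrite hc; ring.
  have hs' : s k != s l by apply: contra nkl => /eqP /perm_inj ->.
  rewrite (negbTE hs'); move: (@Ucoef R n theta) => U; rewrite /=; ring.
split.
  move=> i j k f [s w] hij; rewrite /Uop /Ustar /=.
  move: (@Ucoef R n theta) => U.
  case: (eqVneq (s k) j) => [->|_] //=.
  by rewrite eq_sym (negbTE hij) /=; ring.
move=> i j k f [s w] hij; rewrite /Uop /Ustar /=.
move: (@Ucoef R n theta) => U.
case: (eqVneq (s k) i) => [->|_] //=.
by rewrite (negbTE hij) /=; ring.
Qed.
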